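(* Let $G$ and $H$ be graphs such that the strong product $G\boxtimes H$ is $1$-perfectly orientable. Then: (1) if one of $G$, $H$ contains an induced $P_3$, then the other one contains none of $P_5$, $C_4$, $C_5$, the claw, the bull as an induced subgraph; (2) at least one of $G$ and $H$ contains no induced $P_4$.
   Context: All graphs are finite and simple. An orientation of a graph $G$ is $1$-perfect if the out-neighborhood of every vertex induces a clique in $G$; $G$ is $1$-perfectly orientable if it admits a $1$-perfect orientation. The strong product $G\boxtimes H$ has vertex set $V(G)\times V(H)$, with distinct $(u,v),(u',v')$ adjacent iff $u'\in N_G[u]$ and $v'\in N_H[v]$, where $N[\cdot]$ denotes the closed neighborhood. $P_n$, $C_n$ denote the path and cycle on $n$ vertices; the claw is $K_{1,3}$; the bull is the $5$-vertex graph consisting of a triangle with two pendant edges attached at two distinct triangle vertices. *)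

(* Defs.v *)
From mathcomp Require Import all_boot.
Set Implicit Arguments. Unset Strict Implicit. Unset Printing Implicit Defensive.

Definition simple_graph (V : finType) (e : rel V) : Prop :=
  symmetric e /\ irreflexive e.

Definition is_orientation (V : finType) (e o : rel V) : Prop :=
  (forall x y, o x y -> e x y) /\
  (forall x y, e x y -> o x y || o y x) /\
  (forall x y, o x y -> ~~ o y x).

Definition one_perfect (V : finType) (e o : rel V) : Prop :=
  forall v x y, o v x -> o v y -> x != y -> e x y.

Definition one_perfectly_orientable (V : finType) (e : rel V) : Prop :=
  exists o : rel V, is_orientation e o /\ one_perfect e o.

Definition strong_prod (V W : finType) (g : rel V) (h : rel W) : rel (V * W) :=
  fun p q => (p != q) && ((p.1 == q.1) || g p.1 q.1) && ((p.2 == q.2) || h p.2 q.2).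

Definition has_induced (T V : finType) (p : rel T) (e : rel V) : Prop :=
  exists f : T -> V, injective f /\ forall x y, e (f x) (f y) = p x y.

Definition path_graph (n : nat) : rel 'I_n :=
  fun i j => (i.+1 == j :> nat) || (j.+1 == i :> nat).

Arguments path_graph n : clear implicits.

(* Cycle C_n on 'I_n (used for n >= 3). *)
Definition cycle_graph (n : nat) : rel 'I_n :=
  fun i j => [|| (i.+1 == j :> nat), (j.+1 == i :> nat),
                 ((i == 0 :> nat) && (j == n.-1 :> nat))
               | ((j == 0 :> nat) && (i == n.-1 :> nat))].

Arguments cycle_graph n : clear implicits.

Definition claw : rel 'I_4 :=
  fun i j => ((i == 0 :> nat) && (j != 0 :> nat)) || ((j == 0 :> nat) && (i != 0 :> nat)).

Definition bull_edge (a b : nat) : bool :=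
  [|| (a == 0) && (b == 1), (a == 0) && (b == 2), (a == 1) && (b == 2),
      (a == 0) && (b == 3) | (a == 1) && (b == 4)].
Definition bull : rel 'I_5 :=
  fun i j => bull_edge i j || bull_edge j i.

Definition forbidden_family (V : finType) (e : rel V) : Prop :=
  ~ has_induced (path_graph 5) e /\ ~ has_induced (cycle_graph 4) e /\
  ~ has_induced (cycle_graph 5) e /\ ~ has_induced claw e /\
  ~ has_induced bull e.

(* Main.v *)
Require Import Defs.
From mathcomp Require Import all_boot.
From Stdlib Require Import Classical.
Set Implicit Arguments. Unset Strict Implicit. Unset Printing Implicit Defensive.

Section Gen.
Variables (T : finType) (e : rel T).

Definition stepb (a b : T * T) : bool :=
  [&& a.1 == b.2, e a.1 b.1, ~~ e a.2 b.1 & a.2 != b.1].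

Definition certb (c : (T * T) * seq (T * T) * seq (T * T)) : bool :=
  let: (a, s1, s2) := c in
  [&& e a.1 a.2, path stepb a s1, last a s1 == (a.2, a.1),
      path stepb (a.2, a.1) s2 & last (a.2, a.1) s2 == a].

Lemma chain_ok (o : rel T) : is_orientation e o -> one_perfect e o ->
  forall s a, o a.1 a.2 -> path stepb a s -> o (last a s).1 (last a s).2.
Proof.
move=> [oe [eo anti]] op; elim=> [|b s IH] a //= Ha /andP[Hs Hp].
apply: IH Hp; case/and4P: Hs => /eqP E1 Hv Hn Hne.
case/orP: (eo _ _ Hv) => Hb; last by rewrite -E1.
by move: (op _ _ _ Ha Hb Hne); rewrite (negbTE Hn).
Qed.

Lemma cert_no_1po c : certb c -> ~ one_perfectly_orientable e.
Proof.
case: c => [[a s1] s2] /and5P[Ha P1 /eqP L1 P2 /eqP L2] [o [Ho Hop]].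
have [oe [eo anti]] := Ho.
case/orP: (eo _ _ Ha) => H.
  have := chain_ok Ho Hop H P1; rewrite L1 /=.
  by move: (anti _ _ H) => /negbTE ->.
have := chain_ok Ho Hop (a := (a.2, a.1)) H P2; rewrite L2.
by move: (anti _ _ H) => /negbTE ->.
Qed.
End Gen.

Lemma transfer (V W T U : finType) (g : rel V) (h : rel W) (p : rel T) (q : rel U) :
  has_induced p g -> has_induced q h ->
  one_perfectly_orientable (strong_prod g h) -> one_perfectly_orientable (strong_prod p q).
Proof.
move=> [f [fi fe]] [k [ki ke]] [o [[oe [eo anti]] op]].
pose F (a : T * U) := (f a.1, k a.2).
have Fi : injective F.
  by move=> [a1 a2] [b1 b2] [/fi -> /ki ->].
have FE a b : strong_prod g h (F a) (F b) = strong_prod p q a b.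
  rewrite /strong_prod /= (inj_eq Fi) (inj_eq fi) (inj_eq ki) fe ke //.
exists (fun a b => o (F a) (F b)); split; first split.
- by move=> x y /oe; rewrite FE.
- split; first by move=> x y; rewrite -FE => /eo.
  by move=> x y /anti.
- move=> v x y H1 H2 Hne; rewrite -FE; apply: op H1 H2 _.
  by rewrite (inj_eq Fi).
Qed.

Definition cert_P3P5 : _ * seq _ * seq _ := (((@Ordinal 3 0 isT, @Ordinal 5 1 isT), (@Ordinal 3 1 isT, @Ordinal 5 0 isT)), [:: ((@Ordinal 3 0 isT, @Ordinal 5 2 isT), (@Ordinal 3 0 isT, @Ordinal 5 1 isT)); ((@Ordinal 3 0 isT, @Ordinal 5 3 isT), (@Ordinal 3 0 isT, @Ordinal 5 2 isT)); ((@Ordinal 3 1 isT, @Ordinal 5 4 isT), (@Ordinal 3 0 isT, @Ordinal 5 3 isT)); ((@Ordinal 3 2 isT, @Ordinal 5 3 isT), (@Ordinal 3 1 isT, @Ordinal 5 4 isT)); ((@Ordinal 3 1 isT, @Ordinal 5 2 isT), (@Ordinal 3 2 isT, @Ordinal 5 3 isT)); ((@Ordinal 3 0 isT, @Ordinal 5 1 isT), (@Ordinal 3 1 isT, @Ordinal 5 2 isT)); ((@Ordinal 3 1 isT, @Ordinal 5 0 isT), (@Ordinal 3 0 isT, @Ordinal 5 1 isT))], [:: ((@Ordinal 3 2 isT, @Ordinal 5 1 isT), (@Ordinal 3 1 isT, @Ordinal 5 0 isT)); ((@Ordinal 3 1 isT, @Ordinal 5 2 isT), (@Ordinal 3 2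 isT, @Ordinal 5 1 isT)); ((@Ordinal 3 0 isT, @Ordinal 5 3 isT), (@Ordinal 3 1 isT, @Ordinal 5 2 isT)); ((@Ordinal 3 1 isT, @Ordinal 5 4 isT), (@Ordinal 3 0 isT, @Ordinal 5 3 isT)); ((@Ordinal 3 2 isT, @Ordinal 5 3 isT), (@Ordinal 3 1 isT, @Ordinal 5 4 isT)); ((@Ordinal 3 1 isT, @Ordinal 5 2 isT), (@Ordinal 3 2 isT, @Ordinal 5 3 isT)); ((@Ordinal 3 2 isT, @Ordinal 5 1 isT), (@Ordinal 3 1 isT, @Ordinal 5 2 isT)); ((@Ordinal 3 1 isT, @Ordinal 5 0 isT), (@Ordinal 3 2 isT, @Ordinal 5 1 isT)); ((@Ordinal 3 0 isT, @Ordinal 5 1 isT), (@Ordinal 3 1 isT, @Ordinal 5 0 isT))]).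

Definition cert_P3C4 : _ * seq _ * seq _ := (((@Ordinal 3 1 isT, @Ordinal 4 0 isT), (@Ordinal 3 1 isT, @Ordinal 4 1 isT)), [:: ((@Ordinal 3 0 isT, @Ordinal 4 3 isT), (@Ordinal 3 1 isT, @Ordinal 4 0 isT)); ((@Ordinal 3 1 isT, @Ordinal 4 2 isT), (@Ordinal 3 0 isT, @Ordinal 4 3 isT)); ((@Ordinal 3 2 isT, @Ordinal 4 3 isT), (@Ordinal 3 1 isT, @Ordinal 4 2 isT)); ((@Ordinal 3 1 isT, @Ordinal 4 0 isT), (@Ordinal 3 2 isT, @Ordinal 4 3 isT)); ((@Ordinal 3 1 isT, @Ordinal 4 1 isT), (@Ordinal 3 1 isT, @Ordinal 4 0 isT))], [:: ((@Ordinal 3 0 isT, @Ordinal 4 2 isT), (@Ordinal 3 1 isT, @Ordinal 4 1 isT)); ((@Ordinal 3 1 isT, @Ordinal 4 3 isT), (@Ordinal 3 0 isT, @Ordinal 4 2 isT)); ((@Ordinal 3 2 isT, @Ordinal 4 2 isT), (@Ordinal 3 1 isT, @Ordinal 4 3 isT)); ((@Ordinal 3 1 isT, @Ordinal 4 1 isT), (@Ordinal 3 2 isT, @Ordinal 4 2 isT)); ((@Ordinal 3 1 isT, @Ordinal 4 0 isT), (@Ordinal 3 1 isT, @Ordinal 4 1 isT))]).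

Definition cert_P3C5 : _ * seq _ * seq _ := (((@Ordinal 3 1 isT, @Ordinal 5 0 isT), (@Ordinal 3 1 isT, @Ordinal 5 1 isT)), [:: ((@Ordinal 3 0 isT, @Ordinal 5 4 isT), (@Ordinal 3 1 isT, @Ordinal 5 0 isT)); ((@Ordinal 3 1 isT, @Ordinal 5 3 isT), (@Ordinal 3 0 isT, @Ordinal 5 4 isT)); ((@Ordinal 3 2 isT, @Ordinal 5 4 isT), (@Ordinal 3 1 isT, @Ordinal 5 3 isT)); ((@Ordinal 3 1 isT, @Ordinal 5 0 isT), (@Ordinal 3 2 isT, @Ordinal 5 4 isT)); ((@Ordinal 3 1 isT, @Ordinal 5 1 isT), (@Ordinal 3 1 isT, @Ordinal 5 0 isT))], [:: ((@Ordinal 3 0 isT, @Ordinal 5 2 isT), (@Ordinal 3 1 isT, @Ordinal 5 1 isT)); ((@Ordinal 3 1 isT, @Ordinal 5 3 isT), (@Ordinal 3 0 isT, @Ordinal 5 2 isT)); ((@Ordinal 3 2 isT, @Ordinal 5 2 isT), (@Ordinal 3 1 isT, @Ordinal 5 3 isT)); ((@Ordinal 3 1 isT, @Ordinal 5 1 isT), (@Ordinal 3 2 isT, @Ordinal 5 2 isT)); ((@Ordinal 3 1 isT, @Ordinal 5 0 isT), (@Ordinal 3 1 isT, @Ordinal 5 1 isT))]).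

Definition cert_P3claw : _ * seq _ * seq _ := (((@Ordinal 3 0 isT, @Ordinal 4 0 isT), (@Ordinal 3 1 isT, @Ordinal 4 1 isT)), [:: ((@Ordinal 3 1 isT, @Ordinal 4 2 isT), (@Ordinal 3 0 isT, @Ordinal 4 0 isT)); ((@Ordinal 3 2 isT, @Ordinal 4 0 isT), (@Ordinal 3 1 isT, @Ordinal 4 2 isT)); ((@Ordinal 3 1 isT, @Ordinal 4 3 isT), (@Ordinal 3 2 isT, @Ordinal 4 0 isT)); ((@Ordinal 3 0 isT, @Ordinal 4 0 isT), (@Ordinal 3 1 isT, @Ordinal 4 3 isT)); ((@Ordinal 3 1 isT, @Ordinal 4 1 isT), (@Ordinal 3 0 isT, @Ordinal 4 0 isT))], [:: ((@Ordinal 3 2 isT, @Ordinal 4 0 isT), (@Ordinal 3 1 isT, @Ordinal 4 1 isT)); ((@Ordinal 3 1 isT, @Ordinal 4 2 isT), (@Ordinal 3 2 isT, @Ordinal 4 0 isT)); ((@Ordinal 3 0 isT, @Ordinal 4 0 isT), (@Ordinal 3 1 isT, @Ordinal 4 2 isT)); ((@Ordinal 3 1 isT, @Ordinal 4 3 isT), (@Ordinal 3 0 isT, @Ordinal 4 0 isT)); ((@Ordinal 3 2 isT, @Ordinal 4 0 isT), (@Ordinal 3 1 isT, @Ordinal 4 3 isT)); ((@Ordinal 3 1 isT, @Ordinal 4 1 isT), (@Ordinal 3 2 isT, @Ordinal 4 0 isT)); ((@Ordinal 3 0 isT, @Ordinal 4 0 isT), (@Ordinal 3 1 isT, @Ordinal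 4 1 isT))]).

Definition cert_P3bull : _ * seq _ * seq _ := (((@Ordinal 3 0 isT, @Ordinal 5 0 isT), (@Ordinal 3 1 isT, @Ordinal 5 3 isT)), [:: ((@Ordinal 3 0 isT, @Ordinal 5 1 isT), (@Ordinal 3 0 isT, @Ordinal 5 0 isT)); ((@Ordinal 3 1 isT, @Ordinal 5 4 isT), (@Ordinal 3 0 isT, @Ordinal 5 1 isT)); ((@Ordinal 3 2 isT, @Ordinal 5 1 isT), (@Ordinal 3 1 isT, @Ordinal 5 4 isT)); ((@Ordinal 3 1 isT, @Ordinal 5 2 isT), (@Ordinal 3 2 isT, @Ordinal 5 1 isT)); ((@Ordinal 3 0 isT, @Ordinal 5 0 isT), (@Ordinal 3 1 isT, @Ordinal 5 2 isT)); ((@Ordinal 3 1 isT, @Ordinal 5 3 isT), (@Ordinal 3 0 isT, @Ordinal 5 0 isT))], [:: ((@Ordinal 3 2 isT, @Ordinal 5 0 isT), (@Ordinal 3 1 isT, @Ordinal 5 3 isT)); ((@Ordinal 3 1 isT, @Ordinal 5 2 isT), (@Ordinal 3 2 isT, @Ordinal 5 0 isT)); ((@Ordinal 3 0 isT, @Ordinal 5 1 isT), (@Ordinal 3 1 isT, @Ordinal 5 2 isT)); ((@Ordinal 3 1 isT, @Ordinal 5 4 isT), (@Ordinal 3 0 isT, @Ordinal 5 1 isT)); ((@Ordinal 3 2 isT, @Ordinal 5 1 isT), (@Ordinal 3 1 isT, @Ordinal 5 4 isT)); ((@Ordinal 3 2 isT, @Ordinal 5 0 isT), (@Ordinal 3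 2 isT, @Ordinal 5 1 isT)); ((@Ordinal 3 1 isT, @Ordinal 5 3 isT), (@Ordinal 3 2 isT, @Ordinal 5 0 isT)); ((@Ordinal 3 0 isT, @Ordinal 5 0 isT), (@Ordinal 3 1 isT, @Ordinal 5 3 isT))]).

Definition cert_P5P3 : _ * seq _ * seq _ := (((@Ordinal 5 0 isT, @Ordinal 3 1 isT), (@Ordinal 5 1 isT, @Ordinal 3 0 isT)), [:: ((@Ordinal 5 1 isT, @Ordinal 3 2 isT), (@Ordinal 5 0 isT, @Ordinal 3 1 isT)); ((@Ordinal 5 2 isT, @Ordinal 3 1 isT), (@Ordinal 5 1 isT, @Ordinal 3 2 isT)); ((@Ordinal 5 3 isT, @Ordinal 3 0 isT), (@Ordinal 5 2 isT, @Ordinal 3 1 isT)); ((@Ordinal 5 4 isT, @Ordinal 3 1 isT), (@Ordinal 5 3 isT, @Ordinal 3 0 isT)); ((@Ordinal 5 3 isT, @Ordinal 3 2 isT), (@Ordinal 5 4 isT, @Ordinal 3 1 isT)); ((@Ordinal 5 2 isT, @Ordinal 3 1 isT), (@Ordinal 5 3 isT, @Ordinal 3 2 isT)); ((@Ordinal 5 1 isT, @Ordinal 3 2 isT), (@Ordinal 5 2 isT, @Ordinal 3 1 isT)); ((@Ordinal 5 0 isT, @Ordinal 3 1 isT), (@Ordinal 5 1 isT, @Ordinal 3 2 isT)); ((@Ordinal 5 1 isT, @Ordinal 3 0 isT), (@Ordinal 5 0 isT, @Ordinal 3 1 isT))], [:: ((@Ordinal 5 2 isT, @Ordinal 3 0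 isT), (@Ordinal 5 1 isT, @Ordinal 3 0 isT)); ((@Ordinal 5 3 isT, @Ordinal 3 0 isT), (@Ordinal 5 2 isT, @Ordinal 3 0 isT)); ((@Ordinal 5 4 isT, @Ordinal 3 1 isT), (@Ordinal 5 3 isT, @Ordinal 3 0 isT)); ((@Ordinal 5 3 isT, @Ordinal 3 2 isT), (@Ordinal 5 4 isT, @Ordinal 3 1 isT)); ((@Ordinal 5 2 isT, @Ordinal 3 1 isT), (@Ordinal 5 3 isT, @Ordinal 3 2 isT)); ((@Ordinal 5 1 isT, @Ordinal 3 0 isT), (@Ordinal 5 2 isT, @Ordinal 3 1 isT)); ((@Ordinal 5 0 isT, @Ordinal 3 1 isT), (@Ordinal 5 1 isT, @Ordinal 3 0 isT))]).

Definition cert_C4P3 : _ * seq _ * seq _ := (((@Ordinal 4 0 isT, @Ordinal 3 1 isT), (@Ordinal 4 1 isT, @Ordinal 3 1 isT)), [:: ((@Ordinal 4 3 isT, @Ordinal 3 0 isT), (@Ordinal 4 0 isT, @Ordinal 3 1 isT)); ((@Ordinal 4 2 isT, @Ordinal 3 1 isT), (@Ordinal 4 3 isT, @Ordinal 3 0 isT)); ((@Ordinal 4 3 isT, @Ordinal 3 2 isT), (@Ordinal 4 2 isT, @Ordinal 3 1 isT)); ((@Ordinal 4 0 isT, @Ordinal 3 1 isT), (@Ordinal 4 3 isT, @Ordinal 3 2 isT)); ((@Ordinal 4 1 isT, @Ordinal 3 1 isT), (@Ordinal 4 0 isT, @Ordinal 3 1 isT))], [:: ((@Ordinal 4 2 isT,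 @Ordinal 3 0 isT), (@Ordinal 4 1 isT, @Ordinal 3 1 isT)); ((@Ordinal 4 3 isT, @Ordinal 3 1 isT), (@Ordinal 4 2 isT, @Ordinal 3 0 isT)); ((@Ordinal 4 2 isT, @Ordinal 3 2 isT), (@Ordinal 4 3 isT, @Ordinal 3 1 isT)); ((@Ordinal 4 1 isT, @Ordinal 3 1 isT), (@Ordinal 4 2 isT, @Ordinal 3 2 isT)); ((@Ordinal 4 0 isT, @Ordinal 3 1 isT), (@Ordinal 4 1 isT, @Ordinal 3 1 isT))]).

Definition cert_C5P3 : _ * seq _ * seq _ := (((@Ordinal 5 0 isT, @Ordinal 3 1 isT), (@Ordinal 5 1 isT, @Ordinal 3 1 isT)), [:: ((@Ordinal 5 4 isT, @Ordinal 3 0 isT), (@Ordinal 5 0 isT, @Ordinal 3 1 isT)); ((@Ordinal 5 3 isT, @Ordinal 3 1 isT), (@Ordinal 5 4 isT, @Ordinal 3 0 isT)); ((@Ordinal 5 4 isT, @Ordinal 3 2 isT), (@Ordinal 5 3 isT, @Ordinal 3 1 isT)); ((@Ordinal 5 0 isT, @Ordinal 3 1 isT), (@Ordinal 5 4 isT, @Ordinal 3 2 isT)); ((@Ordinal 5 1 isT, @Ordinal 3 1 isT), (@Ordinal 5 0 isT, @Ordinal 3 1 isT))], [:: ((@Ordinal 5 2 isT, @Ordinal 3 0 isT), (@Ordinal 5 1 isT, @Ordinal 3 1 isT)); ((@Ordinal 5 3 isT, @Ordinal 3 1 isT), (@Ordinal 5 2 isT, @Ordinal 3 0 isT)); ((@Ordinal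 5 2 isT, @Ordinal 3 2 isT), (@Ordinal 5 3 isT, @Ordinal 3 1 isT)); ((@Ordinal 5 1 isT, @Ordinal 3 1 isT), (@Ordinal 5 2 isT, @Ordinal 3 2 isT)); ((@Ordinal 5 0 isT, @Ordinal 3 1 isT), (@Ordinal 5 1 isT, @Ordinal 3 1 isT))]).

Definition cert_clawP3 : _ * seq _ * seq _ := (((@Ordinal 4 0 isT, @Ordinal 3 0 isT), (@Ordinal 4 1 isT, @Ordinal 3 1 isT)), [:: ((@Ordinal 4 2 isT, @Ordinal 3 1 isT), (@Ordinal 4 0 isT, @Ordinal 3 0 isT)); ((@Ordinal 4 0 isT, @Ordinal 3 2 isT), (@Ordinal 4 2 isT, @Ordinal 3 1 isT)); ((@Ordinal 4 3 isT, @Ordinal 3 1 isT), (@Ordinal 4 0 isT, @Ordinal 3 2 isT)); ((@Ordinal 4 0 isT, @Ordinal 3 0 isT), (@Ordinal 4 3 isT, @Ordinal 3 1 isT)); ((@Ordinal 4 1 isT, @Ordinal 3 1 isT), (@Ordinal 4 0 isT, @Ordinal 3 0 isT))], [:: ((@Ordinal 4 0 isT, @Ordinal 3 2 isT), (@Ordinal 4 1 isT, @Ordinal 3 1 isT)); ((@Ordinal 4 2 isT, @Ordinal 3 1 isT), (@Ordinal 4 0 isT, @Ordinal 3 2 isT)); ((@Ordinal 4 0 isT, @Ordinal 3 0 isT), (@Ordinal 4 2 isT, @Ordinal 3 1 isT)); ((@Ordinal 4 3 isT, @Ordinal 3 1 isT), (@Ordinal 4 0 isT, @Ordinal 3 0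 isT)); ((@Ordinal 4 0 isT, @Ordinal 3 2 isT), (@Ordinal 4 3 isT, @Ordinal 3 1 isT)); ((@Ordinal 4 1 isT, @Ordinal 3 1 isT), (@Ordinal 4 0 isT, @Ordinal 3 2 isT)); ((@Ordinal 4 0 isT, @Ordinal 3 0 isT), (@Ordinal 4 1 isT, @Ordinal 3 1 isT))]).

Definition cert_bullP3 : _ * seq _ * seq _ := (((@Ordinal 5 0 isT, @Ordinal 3 0 isT), (@Ordinal 5 3 isT, @Ordinal 3 1 isT)), [:: ((@Ordinal 5 1 isT, @Ordinal 3 0 isT), (@Ordinal 5 0 isT, @Ordinal 3 0 isT)); ((@Ordinal 5 4 isT, @Ordinal 3 1 isT), (@Ordinal 5 1 isT, @Ordinal 3 0 isT)); ((@Ordinal 5 1 isT, @Ordinal 3 2 isT), (@Ordinal 5 4 isT, @Ordinal 3 1 isT)); ((@Ordinal 5 2 isT, @Ordinal 3 1 isT), (@Ordinal 5 1 isT, @Ordinal 3 2 isT)); ((@Ordinal 5 0 isT, @Ordinal 3 0 isT), (@Ordinal 5 2 isT, @Ordinal 3 1 isT)); ((@Ordinal 5 3 isT, @Ordinal 3 1 isT), (@Ordinal 5 0 isT, @Ordinal 3 0 isT))], [:: ((@Ordinal 5 0 isT, @Ordinal 3 2 isT), (@Ordinal 5 3 isT, @Ordinal 3 1 isT)); ((@Ordinal 5 1 isT, @Ordinal 3 2 isT), (@Ordinal 5 0 isT, @Ordinal 3 2 isT)); ((@Ordinal 5 4 isT, @Ordinal 3 1 isT), (@Ordinal 5 1 isT,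 @Ordinal 3 2 isT)); ((@Ordinal 5 1 isT, @Ordinal 3 0 isT), (@Ordinal 5 4 isT, @Ordinal 3 1 isT)); ((@Ordinal 5 2 isT, @Ordinal 3 1 isT), (@Ordinal 5 1 isT, @Ordinal 3 0 isT)); ((@Ordinal 5 0 isT, @Ordinal 3 2 isT), (@Ordinal 5 2 isT, @Ordinal 3 1 isT)); ((@Ordinal 5 3 isT, @Ordinal 3 1 isT), (@Ordinal 5 0 isT, @Ordinal 3 2 isT)); ((@Ordinal 5 0 isT, @Ordinal 3 0 isT), (@Ordinal 5 3 isT, @Ordinal 3 1 isT))]).

Definition cert_P4P4 : _ * seq _ * seq _ := (((@Ordinal 4 0 isT, @Ordinal 4 1 isT), (@Ordinal 4 1 isT, @Ordinal 4 0 isT)), [:: ((@Ordinal 4 1 isT, @Ordinal 4 2 isT), (@Ordinal 4 0 isT, @Ordinal 4 1 isT)); ((@Ordinal 4 2 isT, @Ordinal 4 1 isT), (@Ordinal 4 1 isT, @Ordinal 4 2 isT)); ((@Ordinal 4 3 isT, @Ordinal 4 2 isT), (@Ordinal 4 2 isT, @Ordinal 4 1 isT)); ((@Ordinal 4 2 isT, @Ordinal 4 3 isT), (@Ordinal 4 3 isT, @Ordinal 4 2 isT)); ((@Ordinal 4 1 isT, @Ordinal 4 2 isT), (@Ordinal 4 2 isT, @Ordinal 4 3 isT)); ((@Ordinal 4 0 isT, @Ordinal 4 1 isT), (@Ordinal 4 1 isT, @Ordinal 4 2 isT)); ((@Ordinal 4 1 isT, @Ordinal 4 0 isT), (@Ordinal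 4 0 isT, @Ordinal 4 1 isT))], [:: ((@Ordinal 4 2 isT, @Ordinal 4 1 isT), (@Ordinal 4 1 isT, @Ordinal 4 0 isT)); ((@Ordinal 4 1 isT, @Ordinal 4 2 isT), (@Ordinal 4 2 isT, @Ordinal 4 1 isT)); ((@Ordinal 4 2 isT, @Ordinal 4 3 isT), (@Ordinal 4 1 isT, @Ordinal 4 2 isT)); ((@Ordinal 4 3 isT, @Ordinal 4 2 isT), (@Ordinal 4 2 isT, @Ordinal 4 3 isT)); ((@Ordinal 4 2 isT, @Ordinal 4 1 isT), (@Ordinal 4 3 isT, @Ordinal 4 2 isT)); ((@Ordinal 4 1 isT, @Ordinal 4 0 isT), (@Ordinal 4 2 isT, @Ordinal 4 1 isT)); ((@Ordinal 4 0 isT, @Ordinal 4 1 isT), (@Ordinal 4 1 isT, @Ordinal 4 0 isT))]).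

Ltac nopo c := apply: (cert_no_1po (c := c)); vm_compute; reflexivity.

Lemma nP3P5 : ~ one_perfectly_orientable (strong_prod (path_graph 3) (path_graph 5)).
Proof. nopo cert_P3P5. Qed.
Lemma nP3C4 : ~ one_perfectly_orientable (strong_prod (path_graph 3) (cycle_graph 4)).
Proof. nopo cert_P3C4. Qed.
Lemma nP3C5 : ~ one_perfectly_orientable (strong_prod (path_graph 3) (cycle_graph 5)).
Proof. nopo cert_P3C5. Qed.
Lemma nP3claw : ~ one_perfectly_orientable (strong_prod (path_graph 3) claw).
Proof. nopo cert_P3claw. Qed.
Lemma nP3bull : ~ one_perfectly_orientable (strong_prod (path_graph 3) bull).
Proof. nopo cert_P3bull. Qed.
Lemma nP5P3 : ~ one_perfectly_orientable (strong_prod (path_graph 5) (path_graph 3)).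
Proof. nopo cert_P5P3. Qed.
Lemma nC4P3 : ~ one_perfectly_orientable (strong_prod (cycle_graph 4) (path_graph 3)).
Proof. nopo cert_C4P3. Qed.
Lemma nC5P3 : ~ one_perfectly_orientable (strong_prod (cycle_graph 5) (path_graph 3)).
Proof. nopo cert_C5P3. Qed.
Lemma nclawP3 : ~ one_perfectly_orientable (strong_prod claw (path_graph 3)).
Proof. nopo cert_clawP3. Qed.
Lemma nbullP3 : ~ one_perfectly_orientable (strong_prod bull (path_graph 3)).
Proof. nopo cert_bullP3. Qed.
Lemma nP4P4 : ~ one_perfectly_orientable (strong_prod (path_graph 4) (path_graph 4)).
Proof. nopo cert_P4P4. Qed.

Theorem lemma14 (V W : finType) (g : rel V) (h : rel W)
  (Hg : simple_graph g) (Hh : simple_graph h)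
  (Hpo : one_perfectly_orientable (strong_prod g h)) :
  ((has_induced (path_graph 3) g -> forbidden_family h) /\
   (has_induced (path_graph 3) h -> forbidden_family g)) /\
  (~ has_induced (path_graph 4) g \/ ~ has_induced (path_graph 4) h).
Proof.
split; first split.
- move=> H3; split; [|split; [|split; [|split]]] => HX.
  + exact: nP3P5 (transfer H3 HX Hpo).
  + exact: nP3C4 (transfer H3 HX Hpo).
  + exact: nP3C5 (transfer H3 HX Hpo).
  + exact: nP3claw (transfer H3 HX Hpo).
  + exact: nP3bull (transfer H3 HX Hpo).
- move=> H3; split; [|split; [|split; [|split]]] => HX.
  + exact: nP5P3 (transfer HX H3 Hpo).
  + exact: nC4P3 (transfer HX H3 Hpo).
  + exact: nC5P3 (transfer HX H3 Hpo).
  + exact: nclawP3 (transfer HX H3 Hpo).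
  + exact: nbullP3 (transfer HX H3 Hpo).
- case: (classic (has_induced (path_graph 4) g)) => H1; last by left.
  right => H2; exact: nP4P4 (transfer H1 H2 Hpo).
Qed.
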